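(* Let $f:[0,1]\to\mathbb{R}$ with $f(0),f(1)\in\mathbb{Z}$, and let $n\in\mathbb{N}_+$. Set, for $x\in[0,1]$, \[ \varphi_n(x):=(n+1)\int_0^1 t(1-t)^{n(1-x)}\frac{(1-t)^{nx-1}-t^{nx-1}}{1-2t}\,dt. \] (a) If $f(x)-\varphi_n(x)$ is monotone increasing on $[0,1]$, then $\widetilde{B}_n(f)$ and $\widehat{B}_n(f)$ are monotone increasing on $[0,1]$. (b) If $f(x)+\varphi_n(x)$ is monotone decreasing on $[0,1]$, then $\widetilde{B}_n(f)$ and $\widehat{B}_n(f)$ are monotone decreasing on $[0,1]$.
   Context: For $n\in\mathbb{N}_+$ and $f:[0,1]\to\mathbb{R}$, define $\widetilde{B}_n(f)(x):=\sum_{k=0}^n \left[f\left(\frac{k}{n}\right)\binom{n}{k}\right]x^k(1-x)^{n-k}$, where $[\alpha]$ is the largest integer $\le\alpha$, and $\widehat{B}_n(f)(x):=\sum_{k=0}^n \left\langle f\left(\frac{k}{n}\right)\binom{n}{k}\right\rangle x^k(1-x)^{n-k}$, where $\langle\alpha\rangle$ is the integer nearest to $\alpha$ (when $\alpha$ is a half-integer, $\langle\alpha\rangle$ may be either neighbouring integer, chosen arbitrarily; the result holds for any such choice). Monotone increasing/decreasing are meant in the non-strict sense. *)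

(* Defs.v *)
From HB Require Import structures.
From mathcomp Require Import all_boot all_order all_algebra.
From mathcomp Require Import all_classical all_reals all_analysis.
Set Implicit Arguments. Unset Strict Implicit. Unset Printing Implicit Defensive.
Import Order.TTheory GRing.Theory Num.Theory.
Local Open Scope ring_scope.

Definition intBern (R : realType) (n : nat) (c : nat -> int) (x : R) : R :=
  \sum_(k < n.+1) (c k)%:~R * x ^+ k * (1 - x) ^+ (n - k).

Definition bcoef (R : realType) (f : R -> R) (n k : nat) : R :=
  f (k%:R / n%:R) * ('C(n, k))%:R.

Definition Btilde (R : realType) (f : R -> R) (n : nat) (x : R) : R :=
  intBern n (fun k => Num.floor (bcoef f n k)) x.

(* c is an admissible nearest-integer rounding of the coefficients of
   \widehat{B}_n(f) (ties resolved arbitrarily, possibly depending on k). *)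
Definition nearest_round (R : realType) (f : R -> R) (n : nat) (c : nat -> int) :=
  forall k, (k <= n)%N -> `| (c k)%:~R - bcoef f n k | <= 1 / 2 :> R.

Definition Bhat (R : realType) (n : nat) (c : nat -> int) (x : R) : R :=
  intBern n c x.

(* phi_n(x) = (n+1) \int_0^1 t (1-t)^{n(1-x)} ((1-t)^{nx-1} - t^{nx-1})/(1-2t) dt
   (Lebesgue integral over [0,1]; the integrand is bounded, the point t = 1/2
   is a removable singularity of measure zero). *)
Definition phi (R : realType) (n : nat) (x : R) : R :=
  (n.+1)%:R * Rintegral (@lebesgue_measure R) `[0%R, 1%R]%classic
    (fun t : R => t * (1 - t) `^ (n%:R * (1 - x))
       * (((1 - t) `^ (n%:R * x - 1) - t `^ (n%:R * x - 1)) / (1 - 2 * t))).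

Definition incr_on01 (R : realType) (g : R -> R) :=
  forall x y : R, 0 <= x -> x <= y -> y <= 1 -> g x <= g y.

Definition decr_on01 (R : realType) (g : R -> R) :=
  forall x y : R, 0 <= x -> x <= y -> y <= 1 -> g y <= g x.

(* Main.v *)
Require Import Defs.
From HB Require Import structures.
From mathcomp Require Import all_boot all_order all_algebra.
From mathcomp Require Import all_classical all_reals all_analysis.
From mathcomp Require Import measurable_realfun.
From mathcomp Require Import ring lra.
Import Order.TTheory GRing.Theory Num.Theory.
Import numFieldTopology.Exports numFieldNormedType.Exports.
Local Open Scope ring_scope.
Local Open Scope classical_set_scope.

Section Integ.
Variable R : realType.
Notation mu := (@lebesgue_measure R).

Definition G (n : nat) (x t : R) : R := t * (1 - t) `^ (n%:R * (1 - x))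
       * (((1 - t) `^ (n%:R * x - 1) - t `^ (n%:R * x - 1)) / (1 - 2 * t)).

Lemma phiE n x : phi n x = n.+1%:R * Rintegral mu `[0%R, 1%R] (G n x).
Proof. by []. Qed.

Definition hh (m k : nat) (t : R) : R :=
  \sum_(i < k) XMonemX i (m - i) t - XMonemX 0 m t.

Lemma hhS m k t : hh m k.+1 t = hh m k t + XMonemX k (m - k) t.
Proof. by rewrite /hh big_ord_recr /=; ring. Qed.

Lemma hh_key j p t : (1 - 2 * t) * hh (j + p) j.+1 t =
   t * (1 - t) ^+ p * ((1 - t) ^+ j - t ^+ j).
Proof.
elim: j p => [|j IH] p.
  rewrite /hh big_ord_recr big_ord0 /= /XMonemX /unstable.onem !subn0 add0n; ring.
rewrite hhS mulrDr.
have -> : (j.+1 + p = j + p.+1)%N by rewrite addSnnS.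
rewrite IH.
have -> : (j + p.+1 - j.+1 = p)%N by rewrite -addSnnS addKn.
rewrite /XMonemX /unstable.onem !exprS; ring.
Qed.

Lemma G_eq m k t : (k <= m.+1)%N -> 0 < t < 1 -> t != 2^-1 ->
  G m.+1 (k%:R / m.+1%:R) t = hh m k t.
Proof.
move=> hk /andP[t0 t1] th.
have n0 : m.+1%:R != 0 :> R by rewrite pnatr_eq0.
have e1 : m.+1%:R * (1 - k%:R / m.+1%:R) = (m.+1 - k)%:R :> R.
  by rewrite natrB // mulrBr mulr1 mulrCA divff // mulr1.
have e2 : m.+1%:R * (k%:R / m.+1%:R) = k%:R :> R.
  by rewrite mulrCA divff // mulr1.
have h2 : 1 - 2 * t != 0.
  apply/eqP => h; move/eqP: th; apply; lra.
have t0' : t != 0 by rewrite gt_eqF.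
have t1' : 1 - t != 0 by rewrite gt_eqF // subr_gt0.
rewrite /G e1 e2.
case: k hk e1 e2 => [|j] hk _ _.
  rewrite sub0r !powR_inv1 ?subr_ge0 ?(ltW t0) ?(ltW t1) // subn0.
  rewrite powR_mulrn ?subr_ge0 ?(ltW t1) //.
  rewrite /hh big_ord0 /XMonemX /unstable.onem expr0 mul1r sub0r.
  rewrite exprS; field; rewrite t0' t1' h2 //.
have -> : j.+1%:R - 1 = j%:R :> R by rewrite -natr1 addrK.
rewrite !powR_mulrn ?subr_ge0 ?(ltW t1) ?(ltW t0) // subSS.
have hj : (j <= m)%N by [].
have -> : m = (j + (m - j))%N by rewrite subnKC.
rewrite -[hh _ _ _](mulKf h2) hh_key addKn.
by field.
Qed.


Lemma measurable_inv : measurable_fun [set: R] (@GRing.inv R).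
Proof.
have -> : (@GRing.inv R) = (fun x => if x == 0 then 0 else x^-1).
  by apply/funext => x; case: eqP => // ->; rewrite invr0.
apply: measurable_fun_if => //.
- by apply: measurable_fun_eqr.
- apply: (@measurable_funS _ _ _ _ [set x : R | x != 0]).
  + by apply: open_measurable; apply: open_neq.
  + by move=> x [_ /= ->].
  + apply: open_continuous_measurable_fun; first exact: open_neq.
    by move=> x; rewrite inE /= => hx; apply: inv_continuous.
Qed.

Lemma measurable_G n x : measurable_fun [set: R] (G n x).
Proof.
rewrite /G.
apply: measurable_funM; first apply: measurable_funM.
- by [].
- apply: (@measurableT_comp _ _ _ _ _ _ (fun y : R => y `^ (n%:R * (1 - x))) _ (fun t : R => 1 - t)).
  + exact: measurable_powR.
  + exact: measurable_funB.
apply: measurable_funM.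
- apply: measurable_funB.
  + apply: (@measurableT_comp _ _ _ _ _ _ (fun y : R => y `^ (n%:R * x - 1)) _ (fun t : R => 1 - t)).
    * exact: measurable_powR.
    * exact: measurable_funB.
  + exact: measurable_powR.
- apply: (@measurableT_comp _ _ _ _ _ _ (@GRing.inv R) _ (fun t : R => 1 - 2 * t)).
    exact: measurable_inv.
  apply: measurable_funB => //; exact: measurable_funM.
Qed.

Lemma hh_cont m k : continuous (hh m k).
Proof.
elim: k => [|k IH].
  have -> : hh m 0 = (fun t => 0 - XMonemX 0 m t).
    by apply/funext => t; rewrite /hh big_ord0.
  by move=> x; apply: continuousB; [exact: cst_continuous | exact: continuous_XMonemX].
have -> : hh m k.+1 = (fun t => hh m k t + XMonemX k (m - k) t).
  by apply/funext => t; rewrite hhS.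
by move=> x; apply: continuousD; [exact: IH | exact: continuous_XMonemX].
Qed.

Lemma hh_int m k : mu.-integrable `[0%R, 1%R] (EFin \o hh m k).
Proof.
apply: continuous_compact_integrable; first exact: segment_compact.
by apply: continuous_in_subspaceT => x _; exact: hh_cont.
Qed.


Lemma negl3 (a b c : R) : mu.-negligible ([set a] `|` [set b] `|` [set c]).
Proof.
have h1 : forall r : R, mu.-negligible [set r].
  by move=> r; apply/negligibleP => //; exact: lebesgue_measure_set1.
by apply: negligibleU; [apply: negligibleU|]; apply: h1.
Qed.

Lemma Rint_G m k : (k <= m.+1)%N ->
  Rintegral mu `[0%R, 1%R] (G m.+1 (k%:R / m.+1%:R)) =
  Rintegral mu `[0%R, 1%R] (hh m k).
Proof.
move=> hk; rewrite /Rintegral; congr fine.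
apply: ae_eq_integral => //.
- apply/measurable_EFinP; apply: measurable_funS (measurable_G _ _) => //.
- apply/measurable_EFinP; apply: measurable_funS (continuous_measurable_fun (hh_cont m k)) => //.
- apply: negligibleS (negl3 0 2^-1 1) => x /=.
  move=> hx; apply: contrapT => hn; apply: hx => hD.
  move: hD; rewrite in_itv /= => /andP[h0 h1].
  rewrite G_eq //; last by apply/eqP => e; apply: hn; left; right.
  rewrite !lt_neqAle h0 h1 !andbT; apply/andP; split; apply/eqP => e;
    apply: hn; [left; left | right]; by [].
Qed.


Lemma Rint_hh_diff m k : (k <= m)%N ->
  Rintegral mu `[0%R, 1%R] (hh m k.+1) - Rintegral mu `[0%R, 1%R] (hh m k) =
  (k`! * (m - k)`!)%:R / (m.+1)`!%:R.
Proof.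
move=> hk.
rewrite [X in X - _](_ : _ = Rintegral mu `[0%R, 1%R] (fun t => hh m k t + XMonemX k (m - k) t)); last first.
  by apply: eq_Rintegral => t _; exact: hhS.
rewrite RintegralD //; last exact: integrable_XMonemX.
  rewrite addrAC subrr add0r.
  have := beta_fun_fact (R := R) k (m - k).
  rewrite /beta_fun -Rintegral_mkcond /= subnKC // => <-.
exact: hh_int.
Qed.

Lemma arith k p :
  (k + p).+2%:R * (k`! * p`!)%:R / (k + p).+1`!%:R =
  (('C((k + p).+1, k))%:R)^-1 + (('C((k + p).+1, k.+1))%:R)^-1 :> R.
Proof.
have E1 := bin_fact (leqW (leq_addr p k)).
have E2 : (k.+1 <= (k + p).+1)%N by rewrite ltnS leq_addr.
have {E2} E2 := bin_fact E2.
rewrite subSn ?leq_addr // addKn in E1.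
rewrite subSS addKn in E2.
have hF : (k + p).+1`!%:R != 0 :> R by rewrite pnatr_eq0 -lt0n fact_gt0.
have ha : k`!%:R != 0 :> R by rewrite pnatr_eq0 -lt0n fact_gt0.
have hb : p`!%:R != 0 :> R by rewrite pnatr_eq0 -lt0n fact_gt0.
have hc1 : ('C((k + p).+1, k))%:R != 0 :> R by rewrite pnatr_eq0 -lt0n bin_gt0 leqW // leq_addr.
have hc2 : ('C((k + p).+1, k.+1))%:R != 0 :> R by rewrite pnatr_eq0 -lt0n bin_gt0 ltnS leq_addr.
have i1 : (('C((k + p).+1, k))%:R)^-1 = (k`! * p.+1`!)%:R / (k + p).+1`!%:R :> R.
  by rewrite -E1 natrM; field; rewrite hc1 /= natrM mulf_neq0 // pnatr_eq0 -lt0n fact_gt0.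
have i2 : (('C((k + p).+1, k.+1))%:R)^-1 = (k.+1`! * p`!)%:R / (k + p).+1`!%:R :> R.
  by rewrite -E2 natrM; field; rewrite hc2 /= natrM mulf_neq0 // pnatr_eq0 -lt0n fact_gt0.
rewrite i1 i2 (factS p) (factS k).
set F := (k + p).+1`!%:R.
rewrite !natrM.
have -> : (k + p).+2%:R = p.+1%:R + k.+1%:R :> R.
  by rewrite -natrD addSn addnS addnC.
ring.
Qed.

Lemma phi_diff' n k : (0 < n)%N -> (k < n)%N ->
  phi n (k.+1%:R / n%:R) - phi n (k%:R / n%:R) =
  (('C(n, k))%:R)^-1 + (('C(n, k.+1))%:R)^-1 :> R.
Proof.
move=> n0 hk.
have -> : n = (k + (n.-1 - k)).+1 by rewrite subnKC ?prednK // -ltnS prednK.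
set p := (n.-1 - k)%N; set m := (k + p)%N.
have h1 : (k <= m)%N by rewrite leq_addr.
rewrite !phiE !Rint_G ?ltnS ?h1 ?(leqW h1) //.
rewrite -mulrBr Rint_hh_diff // -/m.
have -> : (m - k = p)%N by rewrite /m addKn.
by rewrite mulrA arith.
Qed.

End Integ.
Local Close Scope classical_set_scope.
Section Bern.
Variable R : realType.

Definition Bern n (a : nat -> R) (x : R) : R :=
  \sum_(k < n.+1) a k * ('C(n, k))%:R * x ^+ k * (1 - x) ^+ (n - k).

Lemma Bern_rec n a x : Bern n.+1 a x =
  (1 - x) * Bern n a x + x * Bern n (fun k => a k.+1) x.
Proof.
rewrite /Bern big_ord_recl /= subn0 bin0.
under eq_bigr => i _ do rewrite /bump /= add1n binS natrD subSS mulrDr mulrDl mulrDl.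
rewrite big_split /= addrA; congr (_ + _).
  rewrite big_ord_recr /= (@bin_small n n.+1) // mulr0 mul0r mul0r addr0.
  rewrite [in RHS]big_ord_recl /= subn0 bin0 mulrDr.
  congr (_ + _); first by rewrite exprS; ring.
  rewrite mulr_sumr.
  apply: eq_bigr => i _; rewrite /bump /= add1n.
  have hi : (i < n)%N := ltn_ord i.
  rewrite -(subnSK hi) [(1 - x) ^+ _.+1]exprS; ring.
rewrite mulr_sumr; apply: eq_bigr => i _; rewrite [x ^+ _.+1]exprS; ring.
Qed.

Lemma Bern_ge0_basis n k x : 0 <= x <= 1 -> 0 <= ('C(n, k))%:R * x ^+ k * (1 - x) ^+ (n - k) :> R.
Proof.
move=> /andP[x0 x1]; rewrite mulr_ge0 // ?mulr_ge0 // ?exprn_ge0 // subr_ge0 //.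
Qed.

Lemma Bern_le n a b x : 0 <= x <= 1 -> (forall k, (k <= n)%N -> a k <= b k) ->
  Bern n a x <= Bern n b x.
Proof.
move=> hx hab; rewrite /Bern; apply: ler_sum => i _.
rewrite -!mulrA; apply: ler_wpM2r; first by rewrite mulrA; exact: Bern_ge0_basis.
by apply: hab; rewrite -ltnS.
Qed.

Lemma Bern_incr n a : (forall k, (k < n)%N -> a k <= a k.+1) ->
  forall x y, 0 <= x -> x <= y -> y <= 1 -> Bern n a x <= Bern n a y.
Proof.
elim: n a => [|n IH] a ha x y x0 xy y1.
  by rewrite /Bern !big_ord_recl !big_ord0 /= !expr0.
rewrite !Bern_rec.
set P := Bern n a; set Q := Bern n (fun k => a k.+1).
have hP : P x <= P y by apply: IH => // k hk; apply: ha; exact: ltnW.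
have hQ : Q x <= Q y by apply: IH => // k hk; apply: ha.
have hPQ : P x <= Q x.
  apply: Bern_le; first by rewrite x0 (le_trans xy y1).
  by move=> k hk; apply: ha.
have e : (1 - y) * P y + y * Q y - ((1 - x) * P x + x * Q x) =
  (1 - y) * (P y - P x) + y * (Q y - Q x) + (y - x) * (Q x - P x) by ring.
rewrite -subr_ge0 e; apply: addr_ge0; first apply: addr_ge0;
  apply: mulr_ge0; lra.
Qed.

End Bern.
Arguments Bern {R}.

Lemma phi_diff (R : realType) n k : (0 < n)%N -> (k < n)%N ->
  phi n (k.+1%:R / n%:R) - phi n (k%:R / n%:R) =
  (('C(n, k))%:R)^-1 + (('C(n, k.+1))%:R)^-1 :> R.
Proof. exact: phi_diff'. Qed.

Section Main.
Variables (R : realType) (f : R -> R) (n : nat).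
Hypothesis n0 : (0 < n)%N.

Let C k : R := ('C(n, k))%:R.
Let xk k : R := k%:R / n%:R.

Lemma myC_gt0 {k} : (k <= n)%N -> 0 < C k.
Proof. by move=> hk; rewrite /C ltr0n bin_gt0. Qed.

Lemma myxk_in {k} : (k <= n)%N -> 0 <= xk k /\ xk k <= 1.
Proof.
move=> hk; have n0' : 0 < n%:R :> R by rewrite ltr0n.
split; first by rewrite /xk divr_ge0.
by rewrite /xk ler_pdivrMr // mul1r ler_nat.
Qed.

Lemma myxk_le k : xk k <= xk k.+1.
Proof.
have n0' : 0 < n%:R :> R by rewrite ltr0n.
by rewrite /xk ler_pM2r ?invr_gt0 // ler_nat.
Qed.


Lemma intBern_Bern (c : nat -> int) x :
  intBern n c x = Bern n (fun k => (c k)%:~R / C k) x.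
Proof.
rewrite /intBern /Bern; apply: eq_bigr => i _.
have hi : (i <= n)%N by rewrite -ltnS.
by rewrite divfK // gt_eqF // myC_gt0.
Qed.

Lemma Bern_N m (a : nat -> R) x : Bern m (fun k => - a k) x = - Bern m a x.
Proof. by rewrite /Bern -sumrN; apply: eq_bigr => i _; rewrite !mulNr. Qed.

Lemma main_gen (c : nat -> int) :
  (forall k, (k <= n)%N -> `|(c k)%:~R - bcoef f n k| <= 1) ->
  (incr_on01 (fun x => f x - phi n x) -> incr_on01 (@intBern R n c)) /\
  (decr_on01 (fun x => f x + phi n x) -> decr_on01 (@intBern R n c)).
Proof.
move=> hc.
set a := fun k => (c k)%:~R / C k.
have ha : forall k, (k <= n)%N -> f (xk k) - (C k)^-1 <= a k <= f (xk k) + (C k)^-1.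
  move=> k hk; have := hc k hk; rewrite /bcoef -/(xk k) -/(C k) ler_norml => /andP[h1 h2].
  have Cp := myC_gt0 hk.
  have e : a k = f (xk k) + ((c k)%:~R - f (xk k) * C k) / C k.
    by rewrite /a mulrBl mulfK ?gt_eqF //; ring.
  rewrite e; apply/andP; split.
    by rewrite lerD2l ler_pdivlMr // mulNr mulVf ?gt_eqF.
  by rewrite lerD2l ler_pdivrMr // mulVf ?gt_eqF.
have hd : forall k, (k < n)%N ->
  phi n (xk k.+1) - phi n (xk k) = (C k)^-1 + (C k.+1)^-1.
  by move=> k hk; rewrite /xk phi_diff.
split.
  move=> hinc x y x0 xy y1; rewrite !intBern_Bern; apply: Bern_incr => // k hk.
  have := ha k (ltnW hk); have := ha k.+1 hk; have := hd k hk.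
  have [h0 h1] := myxk_in (ltnW hk); have [h2 h3] := myxk_in hk.
  have := hinc _ _ h0 (myxk_le k) h3.
  move=> h4 h5 /andP[h6 h7] /andP[h8 h9]; change (a k <= a k.+1); lra.
move=> hdec x y x0 xy y1; rewrite !intBern_Bern.
suff: - Bern n a x <= - Bern n a y by rewrite lerN2.
rewrite -!Bern_N.
apply: Bern_incr => // k hk.
have := ha k (ltnW hk); have := ha k.+1 hk; have := hd k hk.
have [h0 h1] := myxk_in (ltnW hk); have [h2 h3] := myxk_in hk.
have := hdec _ _ h0 (myxk_le k) h3.
move=> h4 h5 /andP[h6 h7] /andP[h8 h9]; change (- a k <= - a k.+1); lra.
Qed.

End Main.

Theorem theorem1p8 (R : realType) (f : R -> R) (n : nat) :
  (0 < n)%N ->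
  f 0 \is a Num.int -> f 1 \is a Num.int ->
  (incr_on01 (fun x => f x - phi n x) ->
     incr_on01 (Btilde f n) /\
     (forall c : nat -> int, nearest_round f n c -> incr_on01 (@Bhat R n c))) /\
  (decr_on01 (fun x => f x + phi n x) ->
     decr_on01 (Btilde f n) /\
     (forall c : nat -> int, nearest_round f n c -> decr_on01 (@Bhat R n c))).
Proof.
move=> n0 _ _.
have ht : forall k, (k <= n)%N ->
    `|(Num.floor (bcoef f n k))%:~R - bcoef f n k| <= 1 :> R.
  move=> k _; have h1 := floor_le (bcoef f n k).
  have h2 := floorD1_gt (bcoef f n k); rewrite rmorphD /= in h2.
  rewrite ler_norml; apply/andP; split; lra.
have hh : forall c, nearest_round f n c -> forall k, (k <= n)%N ->
    `|(c k)%:~R - bcoef f n k| <= 1 :> R.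
  by move=> c hc k hk; apply: le_trans (hc k hk) _; lra.
have [t1 t2] := @main_gen R f n n0 _ ht.
split=> H; split; rewrite /Btilde /Bhat.
- exact: t1.
- by move=> c hc; have [u1 u2] := @main_gen R f n n0 _ (hh c hc); exact: u1.
- exact: t2.
- by move=> c hc; have [u1 u2] := @main_gen R f n n0 _ (hh c hc); exact: u2.
Qed.
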